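(* Let $r>1$ and let $k,\ell,m$ be positive integers with $k\ge 2$. Choose $x_0$ uniformly at random from the vertex set of the $(k,\ell,m)$-metafunnel and run the Moran process with fitness $r$ on it with initial mutant $x_0$. Then the extinction probability is at least $1/(2(m+r))$.
   Context: Moran process: given a directed graph $G$ and fitness $r$, one vertex $x_0$ is a mutant, the rest non-mutants. At each step a vertex $v$ is chosen with probability proportional to fitness (mutants $r$, non-mutants $1$), an out-neighbour $w$ of $v$ is chosen uniformly at random and the state of $v$ is copied to $w$. Extinction: eventually no vertex is a mutant. The $(k,\ell,m)$-metafunnel has vertex set $V_0\cup V_1\cup\dots\cup V_k$ (disjoint), where $V_0=\{v^*\}$ and for $i\in[k]$, $V_i$ is the disjoint union of sets $V_{i,1},\dots,V_{i,\ell}$ each of size $m^i$; its edge set is $(V_0\times V_k)\cup(V_1\times V_0)\cup\bigcup_{i\in[k-1]}\bigcup_{j\in[\ell]}(V_{i+1,j}\times V_{i,j})$. *)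

(* Defs.v *)
From HB Require Import structures.
From mathcomp Require Import all_boot all_order all_algebra.
From mathcomp Require Import all_classical all_reals topology normedtype sequences.
Set Implicit Arguments. Unset Strict Implicit. Unset Printing Implicit Defensive.
Import Order.TTheory GRing.Theory Num.Theory numFieldNormedType.Exports.
Local Open Scope ring_scope.

Section Moran.
Variables (R : realType) (V : finType) (E : rel V) (r : R).

Definition outN (v : V) : {set V} := [set w | E v w].
Definition outdeg (v : V) : nat := #|outN v|.

(* fitness of v in state S (S = set of mutants) *)
Definition fit (S : {set V}) (v : V) : R := if v \in S then r else 1.
Definition totfit (S : {set V}) : R := \sum_(v : V) fit S v.

Definition moran_update (S : {set V}) (v w : V) : {set V} :=
  if v \in S then w |: S else S :\ w.

(* probability that, started from S, the mutants are extinct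
   (state = set0) after at most n steps *)
Fixpoint ext_within (n : nat) (S : {set V}) : R :=
  match n with
  | 0%N => if S == finset.set0 then 1 else 0
  | n'.+1 => if S == finset.set0 then 1 else
      \sum_(v : V) \sum_(w in outN v)
         (fit S v / totfit S) * (outdeg v)%:R^-1 * ext_within n' (moran_update S v w)
  end.

(* extinction probability from initial mutant set S: probability of
   eventually reaching set0 = limit of the nondecreasing sequence above *)
Definition ext_prob (S : {set V}) : R := limn (fun n => ext_within n S).

Definition ext_prob_uniform : R :=
  (#|V|%:R)^-1 * \sum_(x : V) ext_prob [set x].
End Moran.

(* A vertex is either None = v^*, or Some <<i; (j, a)>> with i : 'I_k
   standing for level i+1 in [k], j : 'I_l the branch, and a : 'I_(m^(i+1))
   the index inside V_{i+1, j}. *)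
Definition mf_vertex (k l m : nat) : finType :=
  option {i : 'I_k & ('I_l * 'I_(m ^ i.+1))%type}.

Definition mf_edge (k l m : nat) : rel (mf_vertex k l m) :=
  fun u v =>
    match u, v with
    | None, Some y => (tag y).+1 == k                 (* V_0 x V_k *)
    | Some x, None => (tag x : nat) == 0%N            (* V_1 x V_0 *)
    | Some x, Some y => ((tag x : nat) == (tag y).+1) &&
                        ((tagged x).1 == (tagged y).1)  (* V_{i+1,j} x V_{i,j} *)
    | None, None => false
    end.

(* Main.v *)
Require Import Defs.
From HB Require Import structures.
From mathcomp Require Import all_boot all_order all_algebra.
From mathcomp Require Import all_classical all_reals topology normedtype sequences.
From mathcomp Require Import ring lra zify.
Set Implicit Arguments. Unset Strict Implicit. Unset Printing Implicit Defensive.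
Import Order.TTheory GRing.Theory Num.Theory numFieldNormedType.Exports.
Local Open Scope ring_scope.

Section Gen.
Variables (R : realType) (V : finType) (E : rel V) (r : R).
Hypothesis r_gt0 : 0 < r.

Lemma fit_gt0 (S : {set V}) v : 0 < fit r S v.
Proof. by rewrite /fit; case: ifP. Qed.

Lemma totfit_ge0 (S : {set V}) : 0 <= totfit r S.
Proof. by apply: sumr_ge0 => v _; apply: ltW; apply: fit_gt0. Qed.

Lemma totfit_gt0 (S : {set V}) x : x \in S -> 0 < totfit r S.
Proof.
move=> _; rewrite /totfit (bigD1 x) //=.
apply: lt_le_trans (fit_gt0 S x) _; rewrite lerDl.
by apply: sumr_ge0 => v _; apply: ltW; apply: fit_gt0.
Qed.

Lemma ext_ge0 n S : 0 <= ext_within E r n S.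
Proof.
elim: n S => [|n IH] S /=; first by case: ifP.
case: ifP => // _; apply: sumr_ge0 => v _; apply: sumr_ge0 => w _.
apply: mulr_ge0 => //; apply: mulr_ge0; last by rewrite invr_ge0.
by apply: divr_ge0; [apply: ltW; apply: fit_gt0 | apply: totfit_ge0].
Qed.

Lemma ext_le1 n S : ext_within E r n S <= 1.
Proof.
elim: n S => [|n IH] S /=; first by case: ifP.
case: ifP => // /eqP S0.
have [x xS] : exists x, x \in S.
  by case/set0Pn: (introN eqP S0) => x; exists x.
have T0 := totfit_gt0 xS.
apply: (@le_trans _ _ (\sum_v fit r S v / totfit r S)).
  apply: ler_sum => v _.
  apply: (@le_trans _ _ (\sum_(w in outN E v) fit r S v / totfit r S * (outdeg E v)%:R^-1)).
    apply: ler_sum => w _; rewrite -[X in _ <= X]mulr1; apply: ler_wpM2l => //.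
    apply: mulr_ge0; last by rewrite invr_ge0.
    by apply: divr_ge0; [apply: ltW; apply: fit_gt0 | apply: totfit_ge0].
  rewrite sumr_const /outdeg -mulrnAr.
  have [->|nz] := eqVneq #|outN E v| 0%N.
    rewrite mulr0n mulr0; by apply: divr_ge0; [apply: ltW; apply: fit_gt0 | apply: totfit_ge0].
  by rewrite -[_^-1 *+ _]mulr_natr mulVf ?pnatr_eq0 // mulr1.
by rewrite -mulr_suml divff // gt_eqF.
Qed.

Lemma ext_mono n S : ext_within E r n S <= ext_within E r n.+1 S.
Proof.
elim: n S => [|n IH] S.
  have [-> | Hne] := eqVneq S finset.set0; first by rewrite /= eqxx.
  by rewrite [X in X <= _]/= (negbTE Hne); exact: (ext_ge0 1 S).
rewrite [ext_within _ _ n.+1 _]/= [ext_within _ _ n.+2 _]/=.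
case: ifP => // _; apply: ler_sum => v _; apply: ler_sum => w _.
apply: ler_wpM2l => //; apply: mulr_ge0; last by rewrite invr_ge0.
by apply: divr_ge0; [apply: ltW; apply: fit_gt0 | apply: totfit_ge0].
Qed.

Lemma ext_cvg S : cvgn (fun n => ext_within E r n S).
Proof.
apply: nondecreasing_is_cvgn.
  by apply/nondecreasing_seqP => n; apply: ext_mono.
by exists 1 => _ [n _ <-]; apply: ext_le1.
Qed.

Lemma ext_le_prob n S : ext_within E r n S <= ext_prob E r S.
Proof.
apply: nondecreasing_cvgn_le; last exact: ext_cvg.
by apply/nondecreasing_seqP => k; apply: ext_mono.
Qed.

Lemma ext_prob_ge0 S : 0 <= ext_prob E r S.
Proof. exact: le_trans (ext_ge0 0 S) (ext_le_prob 0 S). Qed.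


Lemma ext_set0 n : ext_within E r n finset.set0 = 1.
Proof. by case: n => [|n] /=; rewrite eqxx. Qed.

Lemma set1_nz (x : V) : [set x] != finset.set0.
Proof. by apply/set0Pn; exists x; rewrite inE. Qed.

Lemma ext_upd n x w : ext_within E r n ([set x] :\ w) =
  ext_within E r n [set x] + (w == x)%:R * (1 - ext_within E r n [set x]).
Proof.
have [->|wx] := eqVneq w x.
  by rewrite finset.setDv ext_set0 mul1r addrC subrK.
have -> : [set x] :\ w = [set x].
  apply/finset.setP => z; rewrite !inE.
  by case: (eqVneq z x) => [->|]; rewrite ?andbF // eq_sym wx.

by rewrite mul0r addr0.
Qed.

Lemma sum_out_eq v x : \sum_(w in outN E v) ((w == x)%:R : R) = (E v x)%:R.
Proof.
rewrite big_mkcond (bigD1 x) //= big1 => [|w wx]; last first.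
  by case: ifP => //; rewrite (negbTE wx).
by rewrite addr0 /outN inE eqxx; case: (E v x).
Qed.

Lemma sum_in_eq x (f : V -> R) : ~~ E x x ->
  \sum_(v | v != x) (E v x)%:R * f v = \sum_(v | E v x) f v.
Proof.
move=> Exx; rewrite [RHS]big_mkcond [RHS](bigD1 x) //= (negbTE Exx) add0r.
by apply: eq_bigr => v _; case: (E v x); rewrite ?mul1r ?mul0r.
Qed.

Lemma totfit1 (x : V) : totfit r [set x] = r + (#|V|.-1)%:R.
Proof.
rewrite /totfit (bigD1 x) //= /fit inE eqxx; congr (_ + _).
rewrite (eq_bigr (fun _ => 1)) => [|v vx]; last by rewrite inE (negbTE vx).
by rewrite sumr_const cardC1.
Qed.

Lemma ext_step n (x : V) : ~~ E x x -> (forall v, v != x -> (0 < outdeg E v)%N) ->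
  (totfit r [set x])^-1 * ((#|V|.-1)%:R * ext_within E r n [set x]
     + (\sum_(v | E v x) (outdeg E v)%:R^-1) * (1 - ext_within E r n [set x]))
    <= ext_within E r n.+1 [set x].
Proof.
move=> Exx dpos.
set q := ext_within E r n [set x]; set A := \sum_(v | E v x) _.
rewrite [ext_within _ _ n.+1 _]/= (negbTE (set1_nz x)) (bigD1 x) //=.
apply: ler_wpDl.
  apply: sumr_ge0 => w _; apply: mulr_ge0; last exact: ext_ge0.
  apply: mulr_ge0; last by rewrite invr_ge0.
  by apply: divr_ge0; [apply: ltW; apply: fit_gt0 | apply: totfit_ge0].
rewrite (eq_bigr (fun v => (totfit r [set x])^-1 *
   (q + (E v x)%:R * ((outdeg E v)%:R^-1 * (1 - q))))); last first.
  move=> v vx.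
  have -> : fit r [set x] v = 1 by rewrite /fit inE (negbTE vx).
  rewrite (eq_bigr (fun w => 1 / totfit r [set x] * (outdeg E v)%:R^-1 *
     (q + (w == x)%:R * (1 - q)))); last first.
    by move=> w _; rewrite /moran_update inE (negbTE vx) ext_upd.
  rewrite -big_distrr /= big_split /= sumr_const -big_distrl /= sum_out_eq.
  have dnz : (outdeg E v)%:R != 0 :> R by rewrite pnatr_eq0 -lt0n dpos.
  rewrite /outdeg in dnz *; field; rewrite dnz /=; apply: lt0r_neq0; apply: (@totfit_gt0 _ x); rewrite inE.
1: by rewrite eqxx. rewrite /= -mulr_sumr big_split /= sumr_const cardC1.
rewrite (sum_in_eq (fun v => (outdeg E v)%:R^-1 * (1 - q))) //.
by rewrite -big_distrl /= -/A mulr_natl mulrC.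
Qed.


Lemma single_bound (x : V) : ~~ E x x -> (forall v, v != x -> (0 < outdeg E v)%N) ->
  (\sum_(v | E v x) (outdeg E v)%:R^-1) / ((\sum_(v | E v x) (outdeg E v)%:R^-1) + r)
    <= ext_prob E r [set x].
Proof.
move=> Exx dpos.
set A := \sum_(v | E v x) _.
set L := ext_prob E r [set x].
set M : R := (#|V|.-1)%:R.
have A0 : 0 <= A by apply: sumr_ge0 => v _; rewrite invr_ge0.
have M0 : 0 <= M by [].
have T0 : 0 < totfit r [set x] by apply: (@totfit_gt0 _ x); rewrite inE.
have hq := (@ext_cvg [set x]).
have key : (totfit r [set x])^-1 * (M * L + A * (1 - L)) <= L.
  apply: (cvgr_to_le (F := eventually) (f := fun n => (totfit r [set x])^-1 *
     (M * ext_within E r n [set x] + A * (1 - ext_within E r n [set x])))).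
    exact: (cvgMl_tmp (a := (totfit r [set x])^-1) (cvgD (cvgMl_tmp (a := M) hq) (cvgMl_tmp (a := A) (cvgB (cvg_cst (1 : R)) hq)))).
  apply: nearW => n; apply: le_trans (ext_step n Exx dpos) (ext_le_prob n.+1 _).
have key' : M * L + A * (1 - L) <= totfit r [set x] * L.
  have Ti : 0 < (totfit r [set x])^-1 by rewrite invr_gt0.
  rewrite -(ler_pM2l Ti) mulrA mulVf ?mul1r //; exact: lt0r_neq0.
rewrite totfit1 -/M in key'.
rewrite ler_pdivrMr; last by apply: ltr_wpDl.
nra.
Qed.

End Gen.
Section MF.
Variables (k l m : nat).
Hypotheses (k2 : (2 <= k)%N) (l0 : (0 < l)%N) (m0 : (0 < m)%N).
Local Notation V := (mf_vertex k l m).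
Local Notation E := (@mf_edge k l m).
Local Notation P := (fun i : 'I_k => ('I_l * 'I_(m ^ i.+1))%type).

Definition lv (i : 'I_k) (jb : P i) : V := Some (Tagged P jb).

Lemma lv_inj i : injective (@lv i).
Proof. move=> a b H; case: H => H; exact: eq_from_Tagged H. Qed.

Definition Vs (i : 'I_k) : {set V} :=
  [set v : V | if v is Some y then tag y == i else false].
Definition Vij (i : 'I_k) (j : 'I_l) : {set V} :=
  [set v : V | if v is Some y then (tag y == i) && ((tagged y).1 == j) else false].

Lemma card_Vs i : #|Vs i| = (l * m ^ i.+1)%N.
Proof.
have -> : Vs i = @lv i @: [set: P i].
  apply/finset.setP => v; rewrite inE.
  case: v => [[i0 jb]|] /=.
    apply/idP/idP.
      by move/eqP=> ei; subst i0; apply/imsetP; exists jb; rewrite ?inE.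
    case/imsetP => jb' _ e.
    have e' : Tagged P jb = Tagged P jb' by case: e.
    by have /= -> := congr1 tag e'.
  by apply/esym/negbTE/negP; case/imsetP.
by rewrite card_imset ?cardsT ?card_prod ?card_ord //; apply: lv_inj.
Qed.

Lemma card_Vij i j : #|Vij i j| = (m ^ i.+1)%N.
Proof.
have -> : Vij i j = (fun b => @lv i (j, b)) @: [set: 'I_(m ^ i.+1)].
  apply/finset.setP => v; rewrite inE.
  case: v => [[i0 [j0 b]]|] /=.
    apply/idP/idP.
      by case/andP=> /eqP ei /eqP ej; subst i0 j0; apply/imsetP; exists b; rewrite ?inE.
    case/imsetP => b' _ e.
    have e' : Tagged P (j0, b) = Tagged P (j, b') := congr1 (fun o : V => if o is Some u then u else Tagged P (j0, b)) e.
    have /= -> := congr1 tag e'.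
    by have /= -> := congr1 (fun u : {i : 'I_k & P i} => (tagged u).1) e'; rewrite !eqxx.
  by apply/esym/negbTE/negP; case/imsetP.
rewrite card_imset ?cardsT ?card_ord //.
by move=> a b /lv_inj [].
Qed.


Lemma mf_outdeg_pos v : (0 < outdeg E v)%N.
Proof.
rewrite /outdeg; apply/card_gt0P.
case: v => [[[[|i'] Hi] [j b]]|].
- by exists None; rewrite inE.
- have hb : (0 < m ^ i'.+1)%N by rewrite expn_gt0 m0.
  exists (@lv (Ordinal (ltnW Hi)) (j, Ordinal hb)); rewrite inE /=.
  by rewrite /mf_edge /= !eqxx.
- have hk : (k.-1 < k)%N by rewrite prednK ?ltnSn // (leq_trans _ k2).
  have hb : (0 < m ^ (Ordinal hk).+1)%N by rewrite expn_gt0 m0.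
  exists (@lv (Ordinal hk) (Ordinal l0, Ordinal hb)); rewrite inE /=.
  by rewrite /mf_edge /= prednK // (leq_trans _ k2).
Qed.

Lemma mf_noloop x : ~~ E x x.
Proof.
case: x => [[i [j b]]|] //=; rewrite /mf_edge /=.
by rewrite (ltn_eqF (ltnSn i)).
Qed.

Lemma A_const (R : realType) x (S : {set V}) d :
  (forall v, E v x = (v \in S)) -> (forall v, v \in S -> outdeg E v = d) ->
  \sum_(v | E v x) (outdeg E v)%:R^-1 = #|S|%:R / d%:R :> R.
Proof.
move=> H1 H2.
rewrite (eq_bigl (fun v => v \in S)); last by move=> v; rewrite H1.
rewrite (eq_bigr (fun _ => d%:R^-1)); last by move=> v vS; rewrite H2.
by rewrite sumr_const -[_ *+ _]mulr_natl.
Qed.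

Lemma A_none (R : realType) :
  \sum_(v | E v None) (outdeg E v)%:R^-1 = (l * m)%:R :> R.
Proof.
have hk : (0 < k)%N by rewrite (leq_trans _ k2).
rewrite (@A_const R None (Vs (Ordinal hk)) 1).
- by rewrite card_Vs divr1 /= expn1.
- by case => [[i jb]|] //; rewrite inE.
- case => [[i jb]|] //; rewrite inE /= => /eqP ei.
  have ev : (i : nat) = 0%N by rewrite ei.
  rewrite /outdeg (_ : outN E _ = [set None]) ?cards1 //.
  apply/finset.setP => w; rewrite !inE.
  case: w => [[i1 jb1]|] /=; rewrite /mf_edge /=; last by rewrite ev.
  by have -> : ((i : nat) == i1.+1) = false by rewrite ev.
by [].

Qed.

Lemma A_mid (R : realType) (i : 'I_k) (j : 'I_l) b (hi : (i.+1 < k)%N) :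
  \sum_(v | E v (@lv i (j, b))) (outdeg E v)%:R^-1 = m%:R :> R.
Proof.
rewrite (@A_const R _ (Vij (Ordinal hi) j) (m ^ i.+1)).
- rewrite card_Vij /= expnS natrM mulfK // pnatr_eq0 -lt0n expn_gt0 m0 //.
- case => [[i0 [j0 b0]]|] //; rewrite inE //= /mf_edge /=.
  by rewrite (ltn_eqF hi).
- case => [[i0 [j0 b0]]|]; rewrite inE //= => /andP [/eqP ei /eqP ej].
  have ev : (i0 : nat) = i.+1 by rewrite ei.
  rewrite /outdeg (_ : outN E _ = Vij i j) ?card_Vij //.
  apply/finset.setP => w; rewrite !inE.
  case: w => [[i1 [j1 b1]]|] /=; rewrite /mf_edge /= ev //= ej.
  by rewrite eqSS [(i : nat) == _]eq_sym [j == _]eq_sym.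
Qed.


Definition nonVk : {set V} :=
  [set x : V | if x is Some y then ((tag y).+1 < k)%N else true].

Lemma card_nonVk : (#|V| <= 2 * m * #|nonVk|)%N.
Proof.
have hk : (k.-1 < k)%N by lia.
have hk2 : (k.-2 < k)%N by lia.
have C : ~: nonVk = Vs (Ordinal hk).
  apply/finset.setP => w; rewrite !inE; case: w => [[i jb]|] //=.
  rewrite -val_eqE /=; have := ltn_ord i.
  by case: (ltnP i.+1 k) => h1 h2 /=; apply/esym; [apply/negbTE; lia | apply/eqP; lia].
have S : Vs (Ordinal hk2) \subset nonVk.
  apply/fintype.subsetP => w; rewrite !inE; case: w => [[i jb]|] //= /eqP -> /=; lia.
have := subset_leq_card S; rewrite card_Vs /= => h.
rewrite -(cardsC nonVk) C card_Vs /=.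
have -> : k.-1.+1 = (k.-2.+1).+1 by lia.
rewrite expnS; move: h; set p := (m ^ k.-2.+1)%N; set a := #|nonVk|.
nia.
Qed.

Lemma A_mono (R : realType) (r : R) (A : R) : 0 < r -> (m%:R <= A) ->
  m%:R / (m%:R + r) <= A / (A + r).
Proof.
move=> r0 hA.
have m00 : 0 <= (m%:R : R) by [].
have h1 : 0 < (m%:R : R) + r by lra.
have h2 : 0 < A + r by lra.
rewrite ler_pdivrMr // mulrAC ler_pdivlMr //.
nra.
Qed.

End MF.

Theorem lemma5p2 (R : realType) (r : R) (k l m : nat) :
  1 < r -> (2 <= k)%N -> (0 < l)%N -> (0 < m)%N ->
  ext_prob_uniform (@mf_edge k l m) r >= (2 * (m%:R + r))^-1.
Proof.
move=> r1 k2 l0 m0.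
have r0 : 0 < r by lra.
have Hx : forall x, x \in nonVk k l m ->
    m%:R / (m%:R + r) <= ext_prob (@mf_edge k l m) r [set x].
  move=> x xin.
  have := single_bound r0 (mf_noloop x) (fun v _ => mf_outdeg_pos k2 l0 m0 v).
  apply: le_trans; apply: A_mono => //.
  case: x xin => [[i [j b]]|] xin.
    rewrite inE /= in xin.
    by rewrite A_mid.
  rewrite A_none // ler_nat; exact: leq_pmull.
rewrite /ext_prob_uniform.
set N := #|mf_vertex k l m|.
set c := m%:R / (m%:R + r).
have hs : c *+ #|nonVk k l m| <= \sum_x ext_prob (@mf_edge k l m) r [set x].
  rewrite (bigID (fun x => x \in nonVk k l m)) /=.
  apply: ler_wpDr; first by apply: sumr_ge0 => x _; exact: ext_prob_ge0.
  rewrite -sumr_const; apply: ler_sum => x; exact: Hx.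
have hN := card_nonVk k2 l0 m0.
set a := #|nonVk k l m| in hs hN.
have N0 : (0 < N)%N by rewrite /N card_option.
have hNr : 0 < (N%:R : R) by rewrite ltr0n.
have mr : 0 < (m%:R : R) + r by have : (0 <= m%:R :> R) by []; lra.
apply: le_trans (_ : N%:R^-1 * (c *+ a) <= _); last first.
  by apply: ler_wpM2l => //; rewrite invr_ge0 ltW.
have -> : N%:R^-1 * (c *+ a) = (m%:R * a%:R) / (N%:R * (m%:R + r)).
  rewrite -mulr_natl /c; field; apply/andP; split; exact: lt0r_neq0.
have hN' : (N%:R : R) <= 2 * m%:R * a%:R by rewrite -!natrM ler_nat.
have NM : 0 < (N%:R : R) * (m%:R + r) by apply: mulr_gt0.
rewrite ler_pdivlMr //.
have -> : (2 * (m%:R + r))^-1 * (N%:R * (m%:R + r)) = N%:R / 2.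
  field; exact: lt0r_neq0.
rewrite ler_pdivrMr // (le_trans hN') //.
by rewrite [X in _ <= X]mulrC mulrA.
Qed.
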